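(* Let $k\ge1$ be an integer and $a,b,c\in\mathbb{C}$ with $a-b,\ a-c,\ a-b+1,\ a-c+1\notin\{0,-1,-2,\dots\}$, $b+c+k\neq0$, and $\mathrm{Re}(a-2b-2c-2k)>1$. Define $$G_k(a,b,c)={}_3F_2\!\left(\left.\begin{array}{c}a,\ b+k,\ c+k\\ a-b+1,\ a-c+1\end{array}\right|1\right).$$ Then $$G_{k+1}(a,b,c)=\frac{a\,[a-1-2(b+c+k)]}{k\,(b+c+k)}\,G_k(a+1,b+1,c+1)-\frac{(a-b)(a-c)}{k\,(b+c+k)}\,G_k(a-1,b,c).$$
   Context: ${}_3F_2(a_1,a_2,a_3;b_1,b_2;1)=\sum_{m\ge0}\frac{(a_1)_m(a_2)_m(a_3)_m}{m!\,(b_1)_m(b_2)_m}$ with $(\alpha)_m=\Gamma(\alpha+m)/\Gamma(\alpha)$, absolutely convergent when $\mathrm{Re}(b_1+b_2-a_1-a_2-a_3)>0$. Note $G_k(a+1,b+1,c+1)={}_3F_2(a+1,b+k+1,c+k+1;a-b+1,a-c+1;1)$ and $G_k(a-1,b,c)={}_3F_2(a-1,b+k,c+k;a-b,a-c;1)$. *)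

(* Defs.v *)
From Stdlib Require Import Reals.
Open Scope R_scope.

Record Cplx : Type := mkC { Re : R ; Im : R }.

Definition Czero : Cplx := mkC 0 0.
Definition Cone : Cplx := mkC 1 0.
Definition RtoC (x : R) : Cplx := mkC x 0.
Definition NtoC (n : nat) : Cplx := RtoC (INR n).
Definition Cadd (z w : Cplx) : Cplx := mkC (Re z + Re w) (Im z + Im w).
Definition Copp (z : Cplx) : Cplx := mkC (- Re z) (- Im z).
Definition Csub (z w : Cplx) : Cplx := Cadd z (Copp w).
Definition Cmul (z w : Cplx) : Cplx :=
  mkC (Re z * Re w - Im z * Im w) (Re z * Im w + Im z * Re w).
Definition Cinv (z : Cplx) : Cplx :=
  mkC (Re z / (Re z * Re z + Im z * Im z)) (- Im z / (Re z * Re z + Im z * Im z)).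
Definition Cdiv (z w : Cplx) : Cplx := Cmul z (Cinv w).

Fixpoint poch (alpha : Cplx) (m : nat) : Cplx :=
  match m with
  | O => Cone
  | S m' => Cmul (poch alpha m') (Cadd alpha (NtoC m'))
  end.

Definition F32_term (a1 a2 a3 b1 b2 : Cplx) (m : nat) : Cplx :=
  Cdiv (Cmul (Cmul (poch a1 m) (poch a2 m)) (poch a3 m))
       (Cmul (Cmul (NtoC (Factorial.fact m)) (poch b1 m)) (poch b2 m)).

Fixpoint F32_partial (a1 a2 a3 b1 b2 : Cplx) (n : nat) : Cplx :=
  match n with
  | O => F32_term a1 a2 a3 b1 b2 0
  | S n' => Cadd (F32_partial a1 a2 a3 b1 b2 n') (F32_term a1 a2 a3 b1 b2 n)
  end.

Definition F32_sum (a1 a2 a3 b1 b2 : Cplx) (S : Cplx) : Prop :=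
  Un_cv (fun n => Re (F32_partial a1 a2 a3 b1 b2 n)) (Re S) /\
  Un_cv (fun n => Im (F32_partial a1 a2 a3 b1 b2 n)) (Im S).

Definition G_sum (k : nat) (a b c : Cplx) (S : Cplx) : Prop :=
  F32_sum a (Cadd b (NtoC k)) (Cadd c (NtoC k))
          (Cadd (Csub a b) Cone) (Cadd (Csub a c) Cone) S.

Definition not_nonpos_int (z : Cplx) : Prop := forall n : nat, z <> Copp (NtoC n).

(* Main.v *)
Require Import Defs.
From Stdlib Require Import Reals Lra Lia Psatz Field Arith.
Open Scope R_scope.

Lemma Cext (z w : Cplx) : Re z = Re w -> Im z = Im w -> z = w.
Proof. destruct z, w; simpl; intros; subst; reflexivity. Qed.

Ltac cext := apply Cext; cbn [Re Im Cadd Cmul Csub Copp Czero Cone RtoC NtoC Cinv Cdiv]; try ring.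

Lemma Cring : ring_theory Czero Cone Cadd Cmul Csub Copp (@eq Cplx).
Proof.
  constructor; intros; unfold Csub; cext.
Qed.

Lemma Cnorm_zero (z : Cplx) : Re z * Re z + Im z * Im z = 0 -> z = Czero.
Proof. intro H. assert (Re z = 0) by nra. assert (Im z = 0) by nra. cext; lra. Qed.

Lemma Cfield : field_theory Czero Cone Cadd Cmul Csub Copp Cdiv Cinv (@eq Cplx).
Proof.
  constructor.
  - exact Cring.
  - intro H. injection H. lra.
  - reflexivity.
  - intros p Hp. assert (Hn : Re p * Re p + Im p * Im p <> 0).
    { intro E. apply Hp. apply Cnorm_zero. exact E. }
    cext; field; exact Hn.
Qed.

Add Field Cfieldf : Cfield.

Lemma test (a b : Cplx) : b <> Czero -> Cmul (Cdiv a b) b = a.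
Proof. intros. field. auto. Qed.

Lemma NtoC_S m : NtoC (S m) = Cadd (NtoC m) Cone.
Proof. unfold NtoC, RtoC. cext. rewrite S_INR. ring. Qed.

Lemma NtoC_mul m n : NtoC (m * n) = Cmul (NtoC m) (NtoC n).
Proof. unfold NtoC, RtoC. cext. rewrite mult_INR. ring. Qed.

Lemma NtoC_0 : NtoC 0 = Czero.
Proof. cext; simpl; ring. Qed.

Lemma poch_shift x m : Cmul x (poch (Cadd x Cone) m) = Cmul (poch x m) (Cadd x (NtoC m)).
Proof.
  induction m as [|m IH].
  - simpl. rewrite NtoC_0. ring.
  - simpl poch. rewrite NtoC_S. transitivity (Cmul (Cmul x (poch (Cadd x Cone) m)) (Cadd (Cadd x Cone) (NtoC m))). ring.
    rewrite IH. ring.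
Qed.

Lemma poch_succ x m : poch x (S m) = Cmul x (poch (Cadd x Cone) m).
Proof. rewrite poch_shift. reflexivity. Qed.

Lemma Cinv_zero : Cinv Czero = Czero.
Proof. unfold Cinv; simpl. cext; unfold Rdiv; rewrite ?Rmult_0_l, ?Rplus_0_l, ?Rinv_0; ring. Qed.

Lemma Cinv_mul z w : Cinv (Cmul z w) = Cmul (Cinv z) (Cinv w).
Proof.
  destruct (Req_dec (Re z * Re z + Im z * Im z) 0) as [Hz|Hz].
  { apply Cnorm_zero in Hz. subst. replace (Cmul Czero w) with Czero by ring. rewrite Cinv_zero. ring. }
  destruct (Req_dec (Re w * Re w + Im w * Im w) 0) as [Hw|Hw].
  { apply Cnorm_zero in Hw. subst. replace (Cmul z Czero) with Czero by ring. rewrite Cinv_zero. ring. }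
  assert (z <> Czero) by (intro E; subst; apply Hz; simpl; ring).
  assert (w <> Czero) by (intro E; subst; apply Hw; simpl; ring).
  field. auto.
Qed.

Definition Nrm (z : Cplx) := Re z * Re z + Im z * Im z.
Lemma Nrm_mul z w : Nrm (Cmul z w) = Nrm z * Nrm w.
Proof. unfold Nrm; simpl; ring. Qed.
Lemma Nrm_ge0 z : 0 <= Nrm z.
Proof. unfold Nrm; nra. Qed.

Section T.
Variables a1 a2 a3 b1 b2 : Cplx.
Definition Tm m := F32_term a1 a2 a3 b1 b2 m.

Lemma term_rec m :
  Cmul (NtoC (S m)) (Cmul (Cadd b1 (NtoC m)) (Cadd b2 (NtoC m))) <> Czero ->
  Cmul (Tm (S m)) (Cmul (NtoC (S m)) (Cmul (Cadd b1 (NtoC m)) (Cadd b2 (NtoC m)))) =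
  Cmul (Tm m) (Cmul (Cmul (Cadd a1 (NtoC m)) (Cadd a2 (NtoC m))) (Cadd a3 (NtoC m))).
Proof.
  intro HX. unfold Tm, F32_term, Cdiv. simpl poch.
  change (Factorial.fact (S m)) with (S m * Factorial.fact m)%nat.
  rewrite NtoC_mul.
  set (X := Cmul (NtoC (S m)) (Cmul (Cadd b1 (NtoC m)) (Cadd b2 (NtoC m)))) in *.
  set (D := Cmul (Cmul (NtoC (Factorial.fact m)) (poch b1 m)) (poch b2 m)).
  replace (Cmul (Cmul (Cmul (NtoC (S m)) (NtoC (Factorial.fact m)))
                   (Cmul (poch b1 m) (Cadd b1 (NtoC m))))
                   (Cmul (poch b2 m) (Cadd b2 (NtoC m)))) with (Cmul D X) by (unfold D, X; ring).
  rewrite Cinv_mul. set (u := Cinv D). field. exact HX.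
Qed.
End T.

Definition Near1 (f : R -> R) (a H : R) :=
  0 <= H /\ forall x, 0 <= x <= 1 -> Rabs (f x - 1 - a * x) <= H * x ^ 2.

Lemma near_q u v : Near1 (fun x => 1 + u * x + v * x ^ 2) u (Rabs v).
Proof.
  split. apply Rabs_pos. intros x Hx.
  replace (1 + u * x + v * x ^ 2 - 1 - u * x) with (v * x ^ 2) by ring.
  rewrite Rabs_mult. rewrite (Rabs_right (x^2)). lra. apply Rle_ge. apply pow_le. lra.
Qed.

Lemma near_mul f g a b Hf Hg : Near1 f a Hf -> Near1 g b Hg ->
  Near1 (fun x => f x * g x) (a + b)
    (Rabs a * Rabs b + Hf + Hg + Rabs a * Hg + Rabs b * Hf + Hf * Hg).
Proof.
  intros [Hf0 HF] [Hg0 HG]. split.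
  { pose proof (Rabs_pos a); pose proof (Rabs_pos b). nra. }
  intros x Hx. specialize (HF x Hx). specialize (HG x Hx).
  set (rf := f x - 1 - a * x) in *. set (rg := g x - 1 - b * x) in *.
  replace (f x * g x - 1 - (a + b) * x) with
    (a * b * x ^ 2 + rf + rg + a * x * rg + b * x * rf + rf * rg)
    by (unfold rf, rg; ring).
  assert (Hx2 : 0 <= x ^ 2) by (apply pow_le; lra).
  assert (Hx2' : x ^ 2 <= 1) by (simpl; nra).
  assert (E1 : Rabs (a * b * x ^ 2) = Rabs a * Rabs b * x ^ 2).
  { rewrite !Rabs_mult. rewrite (Rabs_right (x^2)) by lra. ring. }
  assert (E2 : Rabs (a * x * rg) <= Rabs a * Hg * x ^ 2).
  { rewrite !Rabs_mult. rewrite (Rabs_right x) by lra.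
    pose proof (Rabs_pos a). pose proof (Rabs_pos rg).
    apply Rle_trans with (Rabs a * x * (Hg * x ^ 2)). apply Rmult_le_compat_l; nra.
    assert (0 <= Rabs a * Hg * x^2) by (apply Rmult_le_pos; [apply Rmult_le_pos|]; lra). nra. }
  assert (E3 : Rabs (b * x * rf) <= Rabs b * Hf * x ^ 2).
  { rewrite !Rabs_mult. rewrite (Rabs_right x) by lra.
    pose proof (Rabs_pos b). pose proof (Rabs_pos rf).
    apply Rle_trans with (Rabs b * x * (Hf * x ^ 2)). apply Rmult_le_compat_l; nra.
    assert (0 <= Rabs b * Hf * x^2) by (apply Rmult_le_pos; [apply Rmult_le_pos|]; lra). nra. }
  assert (E4 : Rabs (rf * rg) <= Hf * Hg * x ^ 2).
  { rewrite Rabs_mult. pose proof (Rabs_pos rf). pose proof (Rabs_pos rg).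
    apply Rle_trans with ((Hf * x^2) * (Hg * x ^ 2)). apply Rmult_le_compat; auto.
    assert (0 <= Hf * Hg * x^2) by (apply Rmult_le_pos; [apply Rmult_le_pos|]; lra).
    replace ((Hf * x^2) * (Hg * x ^ 2)) with ((Hf * Hg * x^2) * x^2) by ring. nra. }
  set (t1 := a * b * x ^ 2) in *. set (t4 := a * x * rg) in *. set (t5 := b * x * rf) in *.
  set (t6 := rf * rg) in *.
  pose proof (Rabs_triang (t1 + rf + rg + t4 + t5) t6).
  pose proof (Rabs_triang (t1 + rf + rg + t4) t5).
  pose proof (Rabs_triang (t1 + rf + rg) t4).
  pose proof (Rabs_triang (t1 + rf) rg).
  pose proof (Rabs_triang t1 rf).
  lra.
Qed.

Lemma abs_le_b x y : Rabs x <= y -> - y <= x <= y.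
Proof. intro H. pose proof (Rle_abs x). pose proof (Rle_abs (-x)). rewrite Rabs_Ropp in *. lra. Qed.

Lemma near_diff fR fL aR aL HR HL : Near1 fR aR HR -> Near1 fL aL HL ->
  forall x, 0 <= x <= 1 -> fR x - fL x >= (aR - aL) * x - (HR + HL) * x ^ 2.
Proof.
  intros [_ A] [_ B] x Hx. specialize (A x Hx). specialize (B x Hx).
  apply abs_le_b in A. apply abs_le_b in B. lra.
Qed.

Lemma ev_generic fR fL aR aL HR HL : Near1 fR aR HR -> Near1 fL aL HL -> aR - aL > 0 ->
  exists K, 0 < K /\ forall r, K <= r -> fL (/ r) <= fR (/ r).
Proof.
  intros NR NL HA.
  pose proof (near_diff _ _ _ _ _ _ NR NL) as ND.
  destruct NL as [HL0 _]. destruct NR as [HR0 _].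
  set (A := aR - aL) in *. set (H := HR + HL) in *.
  assert (HH : 0 <= H) by (unfold H; lra).
  exists (1 + (H + 1) / A). split.
  { assert (0 < (H+1)/A) by (apply Rdiv_lt_0_compat; lra). lra. }
  intros r Hr.
  assert (HAr : (H + 1) / A < r) by lra.
  assert (Hr1 : 1 < r). { assert (0 < (H+1)/A) by (apply Rdiv_lt_0_compat; lra). lra. }
  assert (Hx : 0 <= / r <= 1).
  { split. left; apply Rinv_0_lt_compat; lra. rewrite <- Rinv_1. apply Rinv_le_contravar; lra. }
  specialize (ND (/ r) Hx).
  assert (Hpos : A * / r - H * (/ r) ^ 2 > 0).
  { replace (A * / r - H * (/ r) ^ 2) with ((A * r - H) / (r * r)) by (field; lra).
    apply Rdiv_lt_0_compat; [|nra].
    apply (Rmult_lt_compat_r A) in HAr; auto.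
    unfold Rdiv in HAr. rewrite Rmult_assoc, Rinv_l, Rmult_1_r in HAr by lra. lra. }
  lra.
Qed.

Lemma ev_ineq (al1 al1' al2 al2' al3 al3' be1 be1' be2 be2' e d : R) :
  e + be1 + be2 - al1 - al2 - al3 - 1 - d > 0 ->
  exists K, 0 < K /\ forall r, K <= r ->
   (r + 1 + d)^2 * (((al1 + r)^2 + al1'^2) * ((al2 + r)^2 + al2'^2) * ((al3 + r)^2 + al3'^2)) <=
   r ^ 2 * (r + e)^2 * (((be1 + r)^2 + be1'^2) * ((be2 + r)^2 + be2'^2)).
Proof.
  intro Hs.
  assert (NL := near_mul _ _ _ _ _ _ (near_mul _ _ _ _ _ _ (near_mul _ _ _ _ _ _
             (near_q (2*(1+d)) ((1+d)^2)) (near_q (2*al1) (al1^2+al1'^2)))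
             (near_q (2*al2) (al2^2+al2'^2))) (near_q (2*al3) (al3^2+al3'^2))).
  assert (NR := near_mul _ _ _ _ _ _ (near_mul _ _ _ _ _ _
             (near_q (2*e) (e^2)) (near_q (2*be1) (be1^2+be1'^2)))
             (near_q (2*be2) (be2^2+be2'^2))).
  destruct (ev_generic _ _ _ _ _ _ NR NL) as [K [K0 HK]].
  { clear NR NL. lra. }
  exists (K + 1). split. lra.
  intros r Hr. specialize (HK r ltac:(lra)). cbv beta in HK.
  assert (r8 : 0 < r ^ 8) by (apply pow_lt; lra).
  apply Rmult_le_reg_r with (/ r ^ 8). apply Rinv_0_lt_compat; lra.
  eapply Rle_trans; [|eapply Rle_trans; [exact HK|]]; right; field; lra.
Qed.

Lemma Un_cv_ext (u v : nat -> R) l : (forall n, u n = v n) -> Un_cv u l -> Un_cv v l.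
Proof. intros E H eps He. destruct (H eps He) as [N HN]. exists N. intros n Hn. rewrite <- E. auto. Qed.

Lemma Un_cv_const c : Un_cv (fun _ => c) c.
Proof. intros eps He. exists 0%nat. intros. unfold R_dist. rewrite Rminus_diag, Rabs_R0. lra. Qed.

Lemma Un_cv_scal (u : nat -> R) l c : Un_cv u l -> Un_cv (fun n => c * u n) (c * l).
Proof. intro H. apply (CV_mult (fun _ => c)). apply Un_cv_const. exact H. Qed.

Lemma squeeze0 (u x : nat -> R) C N0 : (forall n, (N0 <= n)%nat -> Rabs (u n) <= C * x n) ->
  Un_cv x 0 -> Un_cv u 0.
Proof.
  intros Hb Hx eps He.
  destruct (Hx (eps / (Rabs C + 1))) as [N HN].
  { apply Rdiv_lt_0_compat; [lra|]. pose proof (Rabs_pos C); lra. }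
  exists (max N N0). intros n Hn. specialize (HN n ltac:(lia)). specialize (Hb n ltac:(lia)).
  unfold R_dist in *. rewrite Rminus_0_r in *.
  pose proof (Rabs_pos C). pose proof (Rle_abs C).
  assert (Hxn : Rabs (x n) < eps / (Rabs C + 1)) by assumption.
  pose proof (Rle_abs (x n)).
  apply Rle_lt_trans with (C * x n). exact Hb.
  apply Rle_lt_trans with ((Rabs C + 1) * Rabs (x n)).
  { pose proof (Rle_abs (C * x n)) as Hcx. rewrite Rabs_mult in Hcx. pose proof (Rabs_pos (x n)).
    assert (Rabs C * Rabs (x n) <= (Rabs C + 1) * Rabs (x n)) by (apply Rmult_le_compat_r; lra). lra. }
  apply Rmult_lt_compat_l with (r := Rabs C + 1) in Hxn; [|lra].
  replace ((Rabs C + 1) * (eps / (Rabs C + 1))) with eps in Hxn by (field; lra). exact Hxn.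
Qed.

Lemma sum_mono (w : nat -> R) : (forall n, 0 <= w n) -> forall m j, sum_f_R0 w m <= sum_f_R0 w (m + j).
Proof.
  intros H m j. induction j. rewrite Nat.add_0_r; lra.
  rewrite Nat.add_succ_r. simpl. specialize (H (S (m + j))). lra.
Qed.

Lemma raabe_sum (w : nat -> R) d M : 0 < d -> (forall n, 0 <= w n) ->
  (forall m, (M <= m)%nat -> (INR m + 1 + d) * w (S m) <= INR m * w m) ->
  {l | Un_cv (fun n => sum_f_R0 w n) l}.
Proof.
  intros Hd Hw Hr. apply growing_cv.
  - intro n. simpl. specialize (Hw (S n)). lra.
  - assert (Key : forall j, d * (sum_f_R0 w (M + j)%nat - sum_f_R0 w M) + INR (M + j)%nat * w (M + j)%nat <= INR M * w M).
    { induction j.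
      - rewrite Nat.add_0_r. lra.
      - rewrite Nat.add_succ_r. simpl sum_f_R0. rewrite S_INR.
        specialize (Hr (M + j)%nat ltac:(lia)). lra. }
    exists (sum_f_R0 w M + INR M * w M / d). intros x [n ->].
    assert (0 <= INR M * w M / d).
    { apply Rmult_le_pos; [apply Rmult_le_pos; [apply pos_INR|apply Hw]|]. left; apply Rinv_0_lt_compat; lra. }
    destruct (le_lt_dec M n) as [HMn|HMn].
    + replace n with (M + (n - M))%nat by lia. specialize (Key (n - M)%nat).
      assert (0 <= INR (M + (n - M))%nat * w (M + (n - M))%nat) by (apply Rmult_le_pos; [apply pos_INR|apply Hw]).
      assert (d * (sum_f_R0 w (M + (n - M))%nat - sum_f_R0 w M) <= INR M * w M) by lra.
      assert (sum_f_R0 w (M + (n - M))%nat - sum_f_R0 w M <= INR M * w M / d).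
      { apply Rmult_le_reg_l with d; auto. match goal with |- _ <= d * (?Y / d) => replace (d * (Y / d)) with Y by (field; lra) end. lra. }
      lra.
    + pose proof (sum_mono w Hw n (M - n)). replace (n + (M - n))%nat with M in H0 by lia. lra.
Qed.

Lemma bernoulli h N : 0 <= h -> 1 + INR N * h <= (1 + h) ^ N.
Proof.
  intro H. induction N. simpl; lra.
  rewrite S_INR. simpl. assert (0 <= INR N * h) by (apply Rmult_le_pos; [apply pos_INR|lra]). nra.
Qed.

Lemma decay (x : nat -> R) d M : 0 < d -> (forall n, 0 <= x n) ->
  (forall m, (M <= m)%nat -> x (S m) * (INR m + 1 + d) <= x m * (INR m + 1)) ->
  Un_cv x 0.
Proof.
  intros Hd Hx Hr.
  destruct (INR_unbounded (/ d)) as [N HN].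
  assert (HNd : 1 < INR N * d).
  { apply Rmult_lt_compat_r with (r := d) in HN; auto. rewrite Rinv_l in HN; lra. }
  assert (HN1 : (1 <= N)%nat). { destruct N. simpl in HNd. lra. lia. }
  set (y m := x m ^ N * (INR m + 1)).
  assert (Hy : forall m, (M <= m)%nat -> y (S m) <= y m).
  { intros m Hm. unfold y. rewrite S_INR. specialize (Hr m Hm).
    pose proof (pos_INR m) as Hm0.
    set (r := INR m + 1) in *. assert (Hr0 : 0 < r) by (unfold r; lra). clearbody r.
    assert (Hq : x (S m) <= x m * (r / (r + d))).
    { apply Rmult_le_reg_r with (r + d). lra. replace (x m * (r / (r + d)) * (r + d)) with (x m * r) by (field; lra).
      lra. }
    assert (HqN : x (S m) ^ N <= x m ^ N * (r / (r + d)) ^ N).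
    { rewrite <- Rpow_mult_distr. apply pow_incr. split; auto. }
    assert (Hb : 1 + INR N * (d / r) <= (1 + d / r) ^ N) by (apply bernoulli; apply Rmult_le_pos; [lra|left; apply Rinv_0_lt_compat; lra]).
    assert (Hc : (r / (r + d)) ^ N * (1 + d / r) ^ N = 1).
    { rewrite <- Rpow_mult_distr. replace (r / (r + d) * (1 + d / r)) with 1 by (field; lra). apply pow1. }
    assert (Hb2 : (r + 1) / r <= (1 + d / r) ^ N).
    { eapply Rle_trans; [|exact Hb]. replace ((r + 1) / r) with (1 + 1 / r) by (field; lra).
      replace (INR N * (d / r)) with ((INR N * d) / r) by (field; lra).
      apply Rplus_le_compat_l. unfold Rdiv. apply Rmult_le_compat_r. left; apply Rinv_0_lt_compat; lra. lra. }
    assert (Hp : 0 <= (r / (r + d)) ^ N) by (apply pow_le; apply Rmult_le_pos; [lra|left; apply Rinv_0_lt_compat; lra]).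
    assert (HxN : 0 <= x m ^ N) by (apply pow_le; auto).
    assert (Hd2 : (r / (r + d)) ^ N * (r + 1) <= r).
    { apply Rmult_le_compat_l with (r := (r / (r+d))^N * r) in Hb2; [|nra].
      replace ((r / (r + d)) ^ N * r * ((r + 1) / r)) with ((r / (r + d)) ^ N * (r + 1)) in Hb2 by (field; lra).
      replace ((r / (r + d)) ^ N * r * (1 + d / r) ^ N) with (r * ((r / (r + d)) ^ N * (1 + d / r) ^ N)) in Hb2 by ring.
      rewrite Hc in Hb2. lra. }
    apply Rle_trans with (x m ^ N * (r / (r + d)) ^ N * (r + 1)).
    apply Rmult_le_compat_r; [lra|exact HqN].
    rewrite Rmult_assoc. apply Rmult_le_compat_l; auto. }
  assert (Hy2 : forall j, y (M + j)%nat <= y M).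
  { induction j. rewrite Nat.add_0_r; lra. rewrite Nat.add_succ_r. specialize (Hy (M + j)%nat ltac:(lia)). lra. }
  intros eps He.
  assert (HeN : 0 < eps ^ N) by (apply pow_lt; lra).
  assert (HyM : 0 <= y M) by (unfold y; apply Rmult_le_pos; [apply pow_le; auto|pose proof (pos_INR M); lra]).
  destruct (INR_unbounded (y M / eps ^ N)) as [K HK].
  exists (max K M). intros n Hn. unfold R_dist. rewrite Rminus_0_r, Rabs_right by (apply Rle_ge; auto).
  specialize (Hy2 (n - M)%nat). replace (M + (n - M))%nat with n in Hy2 by lia.
  assert (HKn : INR K <= INR n) by (apply le_INR; lia).
  assert (Hn1 : 0 < INR n + 1) by (pose proof (pos_INR n); lra).
  assert (HxN : x n ^ N < eps ^ N).
  { unfold y in Hy2. apply Rmult_lt_reg_r with (INR n + 1). lra.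
    apply Rle_lt_trans with (y M). exact Hy2.
    assert (y M < eps ^ N * INR K).
    { apply Rmult_lt_compat_r with (r := eps ^ N) in HK; auto.
      unfold Rdiv in HK. rewrite Rmult_assoc, Rinv_l, Rmult_1_r in HK by lra. lra. }
    nra. }
  destruct (Rlt_le_dec (x n) eps) as [|Hge]; auto.
  assert (eps ^ N <= x n ^ N) by (apply pow_incr; lra). lra.
Qed.

Lemma abs_le_bb x y : Rabs x <= y -> - y <= x <= y.
Proof. intro H. pose proof (Rle_abs x). pose proof (Rle_abs (-x)). rewrite Rabs_Ropp in *. lra. Qed.

Lemma abs_series (u w : nat -> R) : (forall n, Rabs (u n) <= w n) ->
  {l | Un_cv (fun n => sum_f_R0 w n) l} -> {l | Un_cv (fun n => sum_f_R0 u n) l}.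
Proof.
  intros Hb [lw Hw].
  assert (H2 : {l | Un_cv (fun n => sum_f_R0 (fun k => 2 * w k) n) l}).
  { exists (2 * lw). apply Un_cv_ext with (fun n => 2 * sum_f_R0 w n).
    intro n; induction n; simpl; lra. apply Un_cv_scal; auto. }
  destruct (Rseries_CV_comp (fun k => u k + w k) (fun k => 2 * w k)) as [la Ha].
  { intro n. specialize (Hb n). apply abs_le_bb in Hb. lra. }
  exact H2.
  exists (la - lw). apply Un_cv_ext with (fun n => sum_f_R0 (fun k => u k + w k) n - sum_f_R0 w n).
  intro n; induction n; simpl; lra. apply CV_minus; auto.
Qed.

Definition nsq (z : Cplx) (r : R) := (Re z + r) ^ 2 + (Im z) ^ 2.

Lemma Nrm_addN z m : Nrm (Cadd z (NtoC m)) = nsq z (INR m).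
Proof. unfold Nrm, nsq; simpl; ring. Qed.

Lemma Nrm_pos_of z : z <> Czero -> 0 < Nrm z.
Proof. intro H. pose proof (Nrm_ge0 z). destruct H0; auto. exfalso. apply H. apply Cnorm_zero. unfold Nrm in H0. lra. Qed.

Lemma Cmul_neq0 z w : z <> Czero -> w <> Czero -> Cmul z w <> Czero.
Proof.
  intros Hz Hw E. pose proof (Nrm_pos_of _ Hz). pose proof (Nrm_pos_of _ Hw).
  assert (Nrm (Cmul z w) = 0) by (rewrite E; unfold Nrm; simpl; ring).
  rewrite Nrm_mul in H1. nra.
Qed.

Lemma NtoC_S_neq0 m : NtoC (S m) <> Czero.
Proof. intro E. assert (H : INR (S m) = 0) by (change (INR (S m)) with (Re (NtoC (S m))); rewrite E; reflexivity).
  pose proof (lt_0_INR (S m) ltac:(lia)). lra. Qed.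

Lemma abs_Re_le z : Rabs (Re z) <= sqrt (Nrm z).
Proof. rewrite <- sqrt_Rsqr_abs. apply sqrt_le_1. apply Rle_0_sqr. apply Nrm_ge0. unfold Nrm, Rsqr. nra. Qed.
Lemma abs_Im_le z : Rabs (Im z) <= sqrt (Nrm z).
Proof. rewrite <- sqrt_Rsqr_abs. apply sqrt_le_1. apply Rle_0_sqr. apply Nrm_ge0. unfold Nrm, Rsqr. nra. Qed.

Section S.
Variables a1 a2 a3 b1 b2 : Cplx.
Hypothesis Hb1 : forall m, Cadd b1 (NtoC m) <> Czero.
Hypothesis Hb2 : forall m, Cadd b2 (NtoC m) <> Czero.

Definition tw m := sqrt (Nrm (Tm a1 a2 a3 b1 b2 m)).

Lemma Nrm_rec m : Nrm (Tm a1 a2 a3 b1 b2 (S m)) * ((INR m + 1) ^ 2 * (nsq b1 (INR m) * nsq b2 (INR m))) =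
  Nrm (Tm a1 a2 a3 b1 b2 m) * (nsq a1 (INR m) * nsq a2 (INR m) * nsq a3 (INR m)).
Proof.
  pose proof (term_rec a1 a2 a3 b1 b2 m) as H.
  assert (HX : Cmul (NtoC (S m)) (Cmul (Cadd b1 (NtoC m)) (Cadd b2 (NtoC m))) <> Czero).
  { apply Cmul_neq0. apply NtoC_S_neq0. apply Cmul_neq0; auto. }
  specialize (H HX). apply (f_equal Nrm) in H. rewrite !Nrm_mul, !Nrm_addN in H.
  replace (Nrm (NtoC (S m))) with ((INR m + 1) ^ 2) in H by (unfold Nrm; cbn [NtoC RtoC Re Im]; rewrite S_INR; ring).
  rewrite <- H. ring.
Qed.

Lemma raabe_cond e d : 0 <= e ->
  e + Re b1 + Re b2 - Re a1 - Re a2 - Re a3 - 1 - d > 0 -> 0 <= d ->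
  exists M : nat, forall m, (M <= m)%nat ->
   (INR m + 1 + d) * (INR m + 1) * tw (S m) <= INR m * (INR m + e) * tw m.
Proof.
  intros He Hs Hd.
  destruct (ev_ineq (Re a1) (Im a1) (Re a2) (Im a2) (Re a3) (Im a3) (Re b1) (Im b1) (Re b2) (Im b2) e d Hs)
    as [K [K0 HK]].
  destruct (INR_unbounded K) as [M HM]. exists M. intros m Hm.
  assert (HmK : K <= INR m) by (pose proof (le_INR _ _ Hm); lra).
  specialize (HK (INR m) HmK).
  pose proof (Nrm_rec m) as HR.
  set (r := INR m) in *.
  assert (Pb : 0 < nsq b1 r * nsq b2 r).
  { apply Rmult_lt_0_compat; unfold r; rewrite <- Nrm_addN; apply Nrm_pos_of; auto. }
  unfold nsq in HR, Pb.
  set (Nb := ((Re b1 + r) ^ 2 + Im b1 ^ 2) * ((Re b2 + r) ^ 2 + Im b2 ^ 2)) in *.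
  set (Na := ((Re a1 + r) ^ 2 + Im a1 ^ 2) * ((Re a2 + r) ^ 2 + Im a2 ^ 2) * ((Re a3 + r) ^ 2 + Im a3 ^ 2)) in *.
  unfold tw. set (N1 := Nrm (Tm a1 a2 a3 b1 b2 (S m))) in *. set (N0 := Nrm (Tm a1 a2 a3 b1 b2 m)) in *.
  assert (HN0 : 0 <= N0) by apply Nrm_ge0. assert (HN1 : 0 <= N1) by apply Nrm_ge0.
  assert (Hr0 : 0 <= r) by (unfold r; apply pos_INR).
  clearbody r Na Nb N0 N1.
  assert (Hsq : ((r + 1 + d) * (r + 1)) ^ 2 * N1 <= (r * (r + e)) ^ 2 * N0).
  { apply Rmult_le_reg_r with Nb; auto.
    apply Rmult_le_compat_r with (r := N0) in HK; auto.
    replace (((r + 1 + d) * (r + 1)) ^ 2 * N1 * Nb) with ((r + 1 + d) ^ 2 * (N1 * ((r + 1) ^ 2 * Nb))) by ring.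
    rewrite HR. replace ((r * (r + e)) ^ 2 * N0 * Nb) with (r ^ 2 * (r + e) ^ 2 * Nb * N0) by ring.
    replace ((r + 1 + d) ^ 2 * (N0 * Na)) with ((r + 1 + d) ^ 2 * Na * N0) by ring. exact HK. }
  pose proof (sqrt_pos N1). pose proof (sqrt_pos N0).
  pose proof (sqrt_sqrt N1 HN1). pose proof (sqrt_sqrt N0 HN0).
  set (P := (r + 1 + d) * (r + 1) * sqrt N1). set (Q := r * (r + e) * sqrt N0).
  assert (HP : 0 <= P) by (unfold P; repeat apply Rmult_le_pos; lra).
  assert (HQ : 0 <= Q) by (unfold Q; repeat apply Rmult_le_pos; lra).
  assert (P * P <= Q * Q).
  { unfold P, Q. replace ((r + 1 + d) * (r + 1) * sqrt N1 * ((r + 1 + d) * (r + 1) * sqrt N1)) with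
      (((r + 1 + d) * (r + 1)) ^ 2 * (sqrt N1 * sqrt N1)) by ring.
    replace (r * (r + e) * sqrt N0 * (r * (r + e) * sqrt N0)) with ((r * (r + e)) ^ 2 * (sqrt N0 * sqrt N0)) by ring.
    rewrite H1, H2. exact Hsq. }
  nra.
Qed.

Lemma partial_Re n : Re (F32_partial a1 a2 a3 b1 b2 n) = sum_f_R0 (fun m => Re (Tm a1 a2 a3 b1 b2 m)) n.
Proof. induction n; simpl; [reflexivity|]. rewrite IHn. reflexivity. Qed.
Lemma partial_Im n : Im (F32_partial a1 a2 a3 b1 b2 n) = sum_f_R0 (fun m => Im (Tm a1 a2 a3 b1 b2 m)) n.
Proof. induction n; simpl; [reflexivity|]. rewrite IHn. reflexivity. Qed.

Lemma series_conv : Re b1 + Re b2 - Re a1 - Re a2 - Re a3 > 0 -> exists S, F32_sum a1 a2 a3 b1 b2 S.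
Proof.
  intro Hs.
  set (s := Re b1 + Re b2 - Re a1 - Re a2 - Re a3) in *.
  destruct (raabe_cond 1 (s / 2)) as [M HM]; try lra.
  { unfold s in *. lra. }
  assert (Hw : {l | Un_cv (fun n => sum_f_R0 tw n) l}).
  { apply (raabe_sum tw (s / 2) M). lra. intro; apply sqrt_pos.
    intros m Hm. specialize (HM m Hm). pose proof (pos_INR m).
    apply Rmult_le_reg_r with (INR m + 1). lra. lra. }
  destruct (abs_series (fun m => Re (Tm a1 a2 a3 b1 b2 m)) tw) as [lr Hr].
  { intro; apply abs_Re_le. } exact Hw.
  destruct (abs_series (fun m => Im (Tm a1 a2 a3 b1 b2 m)) tw) as [li Hi].
  { intro; apply abs_Im_le. } exact Hw.
  exists (mkC lr li). split; simpl.
  - apply Un_cv_ext with (2 := Hr). intro; symmetry; apply partial_Re.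
  - apply Un_cv_ext with (2 := Hi). intro; symmetry; apply partial_Im.
Qed.

Lemma term_decay : Re b1 + Re b2 - Re a1 - Re a2 - Re a3 > 1 -> Un_cv (fun m => INR m ^ 2 * tw m) 0.
Proof.
  intro Hs.
  set (s := Re b1 + Re b2 - Re a1 - Re a2 - Re a3) in *.
  destruct (raabe_cond 0 ((s - 1) / 2)) as [M HM]; try lra.
  { unfold s in *. lra. }
  apply (decay _ ((s - 1) / 2) M). lra.
  { intro. apply Rmult_le_pos. apply pow_le, pos_INR. apply sqrt_pos. }
  intros m Hm. specialize (HM m Hm). rewrite S_INR. pose proof (pos_INR m).
  pose proof (sqrt_pos (Nrm (Tm a1 a2 a3 b1 b2 (S m)))). unfold tw in *.
  nra.
Qed.
End S.

Lemma RtoC2 : RtoC 2 = Cadd Cone Cone.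
Proof. cext. Qed.

Lemma term0 a1 a2 a3 b1 b2 : Tm a1 a2 a3 b1 b2 0 = Cone.
Proof.
  unfold Tm, F32_term, Cdiv. simpl poch.
  replace (NtoC (Factorial.fact 0)) with Cone by (cext; simpl; ring).
  field. intro E. injection E. lra.
Qed.

Lemma neq_of_nn z n : not_nonpos_int z -> Cadd z (NtoC n) <> Czero.
Proof.
  intros H E. apply (H n). replace z with (Csub (Cadd z (NtoC n)) (NtoC n)) by ring. rewrite E. ring.
Qed.

Lemma nn0 z : not_nonpos_int z -> z <> Czero.
Proof. intros H E. pose proof (neq_of_nn z 0 H). apply H0. rewrite E, NtoC_0. ring. Qed.

Section Id.
Variables a b c : Cplx.
Variable k : nat.
Definition K := NtoC k.
Definition sg := Cadd (Cadd b c) K.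
Definition BB := Cadd b K.
Definition CC := Cadd c K.
Definition B1 := Cadd b (NtoC (S k)).
Definition C1 := Cadd c (NtoC (S k)).
Definition DD := Cadd (Csub a b) Cone.
Definition EE := Cadd (Csub a c) Cone.
Definition pp := Csub a b.
Definition qq := Csub a c.
Definition cc := Csub (Csub a Cone) (Cmul (RtoC 2) sg).
Definition T1 := Tm a B1 C1 DD EE.
Definition T2 := Tm (Cadd a Cone) B1 C1 DD EE.
Definition T3 := Tm (Csub a Cone) BB CC pp qq.
Definition P1 := F32_partial a B1 C1 DD EE.
Definition P2 := F32_partial (Cadd a Cone) B1 C1 DD EE.
Definition P3 := F32_partial (Csub a Cone) BB CC pp qq.
Definition Rr n := Cadd (Cmul (Cadd (NtoC n) a) (Cadd (NtoC n) (Cadd (Cadd BB CC) Cone))) (Cmul BB CC).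
Definition LL n := Cadd (Csub (Cmul (Cmul K sg) (P1 n)) (Cmul (Cmul a cc) (P2 n))) (Cmul (Cmul pp qq) (P3 n)).

Hypothesis Hp : pp <> Czero.
Hypothesis Hq : qq <> Czero.
Hypothesis HD : forall m, Cadd DD (NtoC m) <> Czero.
Hypothesis HE : forall m, Cadd EE (NtoC m) <> Czero.

Lemma B1_eq : B1 = Cadd BB Cone.
Proof. unfold B1, BB, K. rewrite NtoC_S. ring. Qed.
Lemma C1_eq : C1 = Cadd CC Cone.
Proof. unfold C1, CC, K. rewrite NtoC_S. ring. Qed.

Lemma R2 m : Cmul a (T2 m) = Cmul (Cadd a (NtoC m)) (T1 m).
Proof.
  unfold T2, T1, Tm, F32_term, Cdiv.
  set (u := Cinv _).
  transitivity (Cmul (Cmul (Cmul (Cmul a (poch (Cadd a Cone) m)) (poch B1 m)) (poch C1 m)) u). ring.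
  rewrite poch_shift. ring.
Qed.

Lemma R3 m : Cmul (Cmul (Cmul pp qq) (NtoC (S m))) (T3 (S m)) =
  Cmul (Cmul (Cmul (Csub a Cone) BB) CC) (T1 m).
Proof.
  unfold T3, T1, Tm, F32_term, Cdiv.
  rewrite !poch_succ.
  change (Factorial.fact (S m)) with (S m * Factorial.fact m)%nat. rewrite NtoC_mul.
  replace (Cadd (Csub a Cone) Cone) with a by ring.
  rewrite <- B1_eq, <- C1_eq. fold DD EE.
  replace (Cadd pp Cone) with DD by reflexivity. replace (Cadd qq Cone) with EE by reflexivity.
  set (den := Cmul (Cmul (NtoC (Factorial.fact m)) (poch DD m)) (poch EE m)).
  replace (Cmul (Cmul (Cmul (NtoC (S m)) (NtoC (Factorial.fact m))) (Cmul pp (poch DD m))) (Cmul qq (poch EE m)))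
    with (Cmul (Cmul (Cmul pp qq) (NtoC (S m))) den) by (unfold den; clear; ring).
  rewrite Cinv_mul. set (u := Cinv den).
  pose proof (NtoC_S_neq0 m).
  field. split; [|split]; auto.
Qed.

Lemma identity n : LL n = Cmul (Rr n) (T1 n).
Proof.
  induction n as [|n IH].
  - unfold LL, P1, P2, P3. simpl F32_partial. fold (Tm a B1 C1 DD EE 0).
    fold (Tm (Cadd a Cone) B1 C1 DD EE 0). fold (Tm (Csub a Cone) BB CC pp qq 0).
    unfold T1. rewrite !term0. unfold Rr. rewrite NtoC_0.
    unfold cc, sg, pp, qq, BB, CC. rewrite RtoC2. ring.
  - set (X := Cmul (NtoC (S n)) (Cmul (Cadd DD (NtoC n)) (Cadd EE (NtoC n)))).
    assert (HX : X <> Czero).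
    { apply Cmul_neq0. apply NtoC_S_neq0. apply Cmul_neq0; auto. }
    pose proof (term_rec a B1 C1 DD EE n HX) as E1. fold X in E1. fold T1 in E1.
    assert (E1' : T1 (S n) = Cdiv (Cmul (T1 n) (Cmul (Cmul (Cadd a (NtoC n)) (Cadd B1 (NtoC n))) (Cadd C1 (NtoC n)))) X).
    { rewrite <- E1. field. auto. }
    pose proof (R2 (S n)) as E2. pose proof (R3 n) as E3.
    assert (E3' : T3 (S n) = Cdiv (Cmul (Cmul (Cmul (Csub a Cone) BB) CC) (T1 n)) (Cmul (Cmul pp qq) (NtoC (S n)))).
    { rewrite <- E3. field. pose proof (NtoC_S_neq0 n). auto. }
    transitivity (Cadd (LL n) (Cadd (Cmul (Cmul K sg) (T1 (S n))) (Cadd (Copp (Cmul cc (Cmul a (T2 (S n))))) (Cmul (Cmul pp qq) (T3 (S n)))))).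
    { unfold LL, P1, P2, P3. simpl F32_partial. unfold T1, T2, T3, Tm. ring. }
    rewrite IH, E2, E3', E1'.
    unfold Rr, X. rewrite !NtoC_S, B1_eq, C1_eq.
    unfold cc, sg, DD, EE, pp, qq, BB, CC. rewrite RtoC2.
    field.
    split; [exact (HE n)|]. split; [exact (HD n)|]. split.
    { intro E. apply (NtoC_S_neq0 n). rewrite NtoC_S. exact E. }
    split; [exact Hq|exact Hp].
Qed.
End Id.

Definition Ccv (u : nat -> Cplx) (l : Cplx) :=
  Un_cv (fun n => Re (u n)) (Re l) /\ Un_cv (fun n => Im (u n)) (Im l).

Lemma Ccv_ext u v l : (forall n, u n = v n) -> Ccv u l -> Ccv v l.
Proof. intros E [H1 H2]. split; eapply Un_cv_ext; try eassumption; intro n; simpl; rewrite E; reflexivity. Qed.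

Lemma Ccv_add u v lu lv : Ccv u lu -> Ccv v lv -> Ccv (fun n => Cadd (u n) (v n)) (Cadd lu lv).
Proof. intros [A1 A2] [B1 B2]. split; simpl; apply CV_plus; auto. Qed.

Lemma Ccv_sub u v lu lv : Ccv u lu -> Ccv v lv -> Ccv (fun n => Csub (u n) (v n)) (Csub lu lv).
Proof. intros [A1 A2] [B1 B2]. split; simpl; apply CV_minus; auto. Qed.

Lemma Ccv_scal c u l : Ccv u l -> Ccv (fun n => Cmul c (u n)) (Cmul c l).
Proof. intros [A1 A2]. split; simpl; apply CV_minus || apply CV_plus; apply Un_cv_scal; auto. Qed.

Lemma Ccv_unique u l1 l2 : Ccv u l1 -> Ccv u l2 -> l1 = l2.
Proof. intros [A1 A2] [B1 B2]. apply Cext; eapply UL_sequence; eassumption. Qed.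

Lemma rb (r x1 y1 x2 y2 x3 y3 : R) : 1 <= r ->
  Rabs ((r + x1) * (r + x2) - y1 * y2 + x3) + Rabs ((r + x1) * y2 + y1 * (r + x2) + y3) <=
  ((1 + Rabs x1 + Rabs y1) * (1 + Rabs x2 + Rabs y2) + Rabs x3 + Rabs y3) * r ^ 2.
Proof.
  intro Hr.
  set (u1 := Rabs (r + x1)). set (u2 := Rabs (r + x2)).
  assert (F1 : Rabs ((r + x1) * (r + x2) - y1 * y2 + x3) <= u1 * u2 + Rabs y1 * Rabs y2 + Rabs x3).
  { eapply Rle_trans. apply Rabs_triang. unfold Rminus. eapply Rle_trans. apply Rplus_le_compat_r. apply Rabs_triang.
    rewrite Rabs_Ropp, !Rabs_mult. unfold u1, u2. lra. }
  assert (F2 : Rabs ((r + x1) * y2 + y1 * (r + x2) + y3) <= u1 * Rabs y2 + Rabs y1 * u2 + Rabs y3).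
  { eapply Rle_trans. apply Rabs_triang. eapply Rle_trans. apply Rplus_le_compat_r. apply Rabs_triang.
    rewrite !Rabs_mult. unfold u1, u2. lra. }
  assert (G1 : u1 + Rabs y1 <= r * (1 + Rabs x1 + Rabs y1)).
  { pose proof (Rabs_triang r x1). rewrite (Rabs_right r) in H by lra. pose proof (Rabs_pos x1). pose proof (Rabs_pos y1). unfold u1. nra. }
  assert (G2 : u2 + Rabs y2 <= r * (1 + Rabs x2 + Rabs y2)).
  { pose proof (Rabs_triang r x2). rewrite (Rabs_right r) in H by lra. pose proof (Rabs_pos x2). pose proof (Rabs_pos y2). unfold u2. nra. }
  assert (G : (u1 + Rabs y1) * (u2 + Rabs y2) <= (r * (1 + Rabs x1 + Rabs y1)) * (r * (1 + Rabs x2 + Rabs y2))).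
  { apply Rmult_le_compat; auto; unfold u1, u2; pose proof (Rabs_pos (r+x1)); pose proof (Rabs_pos (r+x2));
    pose proof (Rabs_pos y1); pose proof (Rabs_pos y2); lra. }
  assert (H3 : Rabs x3 + Rabs y3 <= (Rabs x3 + Rabs y3) * r ^ 2).
  { pose proof (Rabs_pos x3). pose proof (Rabs_pos y3). assert (1 <= r ^ 2) by (simpl; nra). nra. }
  replace (((1 + Rabs x1 + Rabs y1) * (1 + Rabs x2 + Rabs y2) + Rabs x3 + Rabs y3) * r ^ 2)
    with ((r * (1 + Rabs x1 + Rabs y1)) * (r * (1 + Rabs x2 + Rabs y2)) + (Rabs x3 + Rabs y3) * r ^ 2) by ring.
  replace ((u1 + Rabs y1) * (u2 + Rabs y2)) with (u1 * u2 + u1 * Rabs y2 + Rabs y1 * u2 + Rabs y1 * Rabs y2) in G by ring.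
  lra.
Qed.

Lemma Ccv_decay (z1 z2 z3 : Cplx) (t : nat -> Cplx) :
  Un_cv (fun m => INR m ^ 2 * sqrt (Nrm (t m))) 0 ->
  Ccv (fun n => Cmul (Cadd (Cmul (Cadd (NtoC n) z1) (Cadd (NtoC n) z2)) z3) (t n)) Czero.
Proof.
  intro Hd.
  set (Kc := (1 + Rabs (Re z1) + Rabs (Im z1)) * (1 + Rabs (Re z2) + Rabs (Im z2)) + Rabs (Re z3) + Rabs (Im z3)).
  assert (Hb : forall n, (1 <= n)%nat ->
     Rabs (Re (Cadd (Cmul (Cadd (NtoC n) z1) (Cadd (NtoC n) z2)) z3)) +
     Rabs (Im (Cadd (Cmul (Cadd (NtoC n) z1) (Cadd (NtoC n) z2)) z3)) <= Kc * INR n ^ 2).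
  { intros n Hn. cbn [Re Im Cadd Cmul NtoC RtoC].
    pose proof (rb (INR n) (Re z1) (Im z1) (Re z2) (Im z2) (Re z3) (Im z3)) as R.
    replace ((INR n + Re z1) * (INR n + Re z2) - (0 + Im z1) * (0 + Im z2) + Re z3)
      with ((INR n + Re z1) * (INR n + Re z2) - Im z1 * Im z2 + Re z3) by ring.
    replace ((INR n + Re z1) * (0 + Im z2) + (0 + Im z1) * (INR n + Re z2) + Im z3)
      with ((INR n + Re z1) * Im z2 + Im z1 * (INR n + Re z2) + Im z3) by ring.
    apply R. apply (le_INR 1). exact Hn. }
  assert (Main : forall (f : Cplx -> R), (forall w s, Rabs (f (Cmul w s)) <= (Rabs (Re w) + Rabs (Im w)) * sqrt (Nrm s)) ->
      Un_cv (fun n => f (Cmul (Cadd (Cmul (Cadd (NtoC n) z1) (Cadd (NtoC n) z2)) z3) (t n))) 0).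
  { intros f Hf. apply squeeze0 with (x := fun m => INR m ^ 2 * sqrt (Nrm (t m))) (C := Kc) (N0 := 1%nat); auto.
    intros n Hn. eapply Rle_trans. apply Hf. rewrite <- Rmult_assoc. apply Rmult_le_compat_r. apply sqrt_pos. auto. }
  split; simpl Re; simpl Im.
  - apply (Main Re). intros w s. cbn [Cmul Re Im]. pose proof (abs_Re_le s). pose proof (abs_Im_le s).
    eapply Rle_trans. unfold Rminus. apply Rabs_triang. rewrite Rabs_Ropp, !Rabs_mult.
    pose proof (Rabs_pos (Re w)). pose proof (Rabs_pos (Im w)). nra.
  - apply (Main Im). intros w s. cbn [Cmul Re Im]. pose proof (abs_Re_le s). pose proof (abs_Im_le s).
    eapply Rle_trans. apply Rabs_triang. rewrite !Rabs_mult.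
    pose proof (Rabs_pos (Re w)). pose proof (Rabs_pos (Im w)). nra.
Qed.

Lemma final_alg (k : nat) (a b c S1 S2 S3 : Cplx) :
  NtoC k <> Czero -> Cadd (Cadd b c) (NtoC k) <> Czero ->
  Cadd (Csub (Cmul (Cmul (NtoC k) (Cadd (Cadd b c) (NtoC k))) S1)
     (Cmul (Cmul a (Csub (Csub a Cone) (Cmul (RtoC 2) (Cadd (Cadd b c) (NtoC k))))) S2))
     (Cmul (Cmul (Csub a b) (Csub a c)) S3) = Czero ->
  S1 = Csub
           (Cmul (Cdiv (Cmul a (Csub (Csub a Cone) (Cmul (RtoC 2) (Cadd (Cadd b c) (NtoC k)))))
                       (Cmul (NtoC k) (Cadd (Cadd b c) (NtoC k)))) S2)
           (Cmul (Cdiv (Cmul (Csub a b) (Csub a c))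
                       (Cmul (NtoC k) (Cadd (Cadd b c) (NtoC k)))) S3).
Proof.
  intros HK Hs Hz.
  match type of Hz with ?Z = _ =>
    transitivity (Csub S1 (Cdiv Z (Cmul (NtoC k) (Cadd (Cadd b c) (NtoC k))))) end.
  - rewrite Hz. unfold Cdiv. ring.
  - field. split; auto.
Qed.

Theorem mainTheorem10 (k : nat) (a b c : Cplx)
  (hk : (1 <= k)%nat)
  (h1 : not_nonpos_int (Csub a b))
  (h2 : not_nonpos_int (Csub a c))
  (h3 : not_nonpos_int (Cadd (Csub a b) Cone))
  (h4 : not_nonpos_int (Cadd (Csub a c) Cone))
  (h5 : Cadd (Cadd b c) (NtoC k) <> Czero)
  (h6 : Re (Csub (Csub (Csub a (Cmul (RtoC 2) b)) (Cmul (RtoC 2) c))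
                 (Cmul (RtoC 2) (NtoC k))) > 1) :
  exists S1 S2 S3 : Cplx,
    G_sum (S k) a b c S1 /\
    G_sum k (Cadd a Cone) (Cadd b Cone) (Cadd c Cone) S2 /\
    G_sum k (Csub a Cone) b c S3 /\
    S1 = Csub
           (Cmul (Cdiv (Cmul a (Csub (Csub a Cone) (Cmul (RtoC 2) (Cadd (Cadd b c) (NtoC k)))))
                       (Cmul (NtoC k) (Cadd (Cadd b c) (NtoC k)))) S2)
           (Cmul (Cdiv (Cmul (Csub a b) (Csub a c))
                       (Cmul (NtoC k) (Cadd (Cadd b c) (NtoC k)))) S3).
Proof.
  cbn [Re Im Csub Cadd Copp Cmul RtoC NtoC] in h6.
  assert (Hp : pp a b <> Czero) by (apply nn0; exact h1).
  assert (Hq : qq a c <> Czero) by (apply nn0; exact h2).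
  assert (HD : forall m, Cadd (DD a b) (NtoC m) <> Czero) by (intro m; apply neq_of_nn; exact h3).
  assert (HE : forall m, Cadd (EE a c) (NtoC m) <> Czero) by (intro m; apply neq_of_nn; exact h4).
  assert (Hp' : forall m, Cadd (pp a b) (NtoC m) <> Czero) by (intro m; apply neq_of_nn; exact h1).
  assert (Hq' : forall m, Cadd (qq a c) (NtoC m) <> Czero) by (intro m; apply neq_of_nn; exact h2).
  assert (Hs1 : Re (DD a b) + Re (EE a c) - Re a - Re (B1 b k) - Re (C1 c k) > 1).
  { unfold DD, EE, B1, C1. cbn [Re Im Csub Cadd Copp Cmul RtoC NtoC Cone]. rewrite S_INR. clear -h6. lra. }
  destruct (series_conv a (B1 b k) (C1 c k) _ _ HD HE ltac:(lra)) as [S1 HS1].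
  destruct (series_conv (Cadd a Cone) (B1 b k) (C1 c k) _ _ HD HE) as [S2 HS2].
  { revert Hs1. cbn [Re Im Csub Cadd Copp Cmul RtoC NtoC Cone]. lra. }
  destruct (series_conv (Csub a Cone) (BB b k) (CC c k) _ _ Hp' Hq') as [S3 HS3].
  { revert Hs1. unfold DD, EE, B1, C1, pp, qq, BB, CC, K.
    cbn [Re Im Csub Cadd Copp Cmul RtoC NtoC Cone]. rewrite S_INR. clear -h6. lra. }
  exists S1, S2, S3.
  assert (eB : Cadd (Cadd b Cone) (NtoC k) = B1 b k) by (unfold B1; rewrite NtoC_S; ring).
  assert (eC : Cadd (Cadd c Cone) (NtoC k) = C1 c k) by (unfold C1; rewrite NtoC_S; ring).
  assert (eD : Cadd (Csub (Cadd a Cone) (Cadd b Cone)) Cone = DD a b) by (unfold DD; ring).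
  assert (eE : Cadd (Csub (Cadd a Cone) (Cadd c Cone)) Cone = EE a c) by (unfold EE; ring).
  assert (ep : Cadd (Csub (Csub a Cone) b) Cone = pp a b) by (unfold pp; ring).
  assert (eq' : Cadd (Csub (Csub a Cone) c) Cone = qq a c) by (unfold qq; ring).
  split; [exact HS1|]. split.
  { unfold G_sum. rewrite eB, eC, eD, eE. exact HS2. }
  split.
  { unfold G_sum. rewrite ep, eq'. exact HS3. }
  assert (HL : Ccv (LL a b c k) (Cadd (Csub (Cmul (Cmul (K k) (sg b c k)) S1) (Cmul (Cmul a (cc a b c k)) S2))
                                      (Cmul (Cmul (pp a b) (qq a c)) S3))).
  { unfold LL. apply (Ccv_add (fun n => Csub (Cmul (Cmul (K k) (sg b c k)) (P1 a b c k n)) (Cmul (Cmul a (cc a b c k)) (P2 a b c k n)))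
                              (fun n => Cmul (Cmul (pp a b) (qq a c)) (P3 a b c k n))).
    apply (Ccv_sub (fun n => Cmul (Cmul (K k) (sg b c k)) (P1 a b c k n)) (fun n => Cmul (Cmul a (cc a b c k)) (P2 a b c k n))).
    apply Ccv_scal. exact HS1. apply Ccv_scal. exact HS2. apply Ccv_scal. exact HS3. }
  assert (HR : Ccv (LL a b c k) Czero).
  { apply Ccv_ext with (fun n => Cmul (Rr a b c k n) (T1 a b c k n)).
    intro n. symmetry. apply identity; auto.
    unfold Rr. apply Ccv_decay. unfold T1.
    apply (term_decay _ _ _ _ _ HD HE). lra. }
  pose proof (Ccv_unique _ _ _ HL HR) as Hz.
  unfold K, sg, cc, pp, qq in Hz.
  assert (HK : NtoC k <> Czero).
  { destruct k. lia. apply NtoC_S_neq0. }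
  apply final_alg; auto.
Qed.
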